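(* Let $R$ be a generalized Rickart $*$-ring and let $B$ be a $*$-subring of $R$ such that (1) $B$ has a unity element, and (2) for every $x\in B$, $GRP(x)\in B$ (where $GRP(x)$ is a generalized right projection of $x$ in $R$). Then $B$ is a generalized Rickart $*$-ring.
   Context: A $*$-ring is an associative ring $R$ with an involution $x\mapsto x^*$ (additive, $(xy)^*=y^*x^*$, $x^{**}=x$); a $*$-subring is a subring closed under $*$. A projection is an element $e$ with $e=e^*=e^2$. For $a$ in a ring $S$, $r(a)=\{b\in S: ab=0\}$. A $*$-ring $S$ is a generalized Rickart $*$-ring if for every $x\in S$ there exist a positive integer $n$ and a projection $g\in S$ with $r(x^n)=gS$. A projection $e\in R$ is a generalized right projection of $x\in R$, written $GRP(x)=e$, if there exists $n\in\mathbb N$ with $x^ne=x^n$ and, for all $y\in R$, $x^ny=0$ implies $ey=0$. *)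

(* Defs.v *)
From mathcomp Require Import all_boot all_order all_algebra.
Set Implicit Arguments. Unset Strict Implicit. Unset Printing Implicit Defensive.
Import GRing.Theory.
Local Open Scope ring_scope.

Definition is_involution (R : pzRingType) (s : R -> R) : Prop :=
  (forall x y : R, s (x + y) = s x + s y) /\
  (forall x y : R, s (x * y) = s y * s x) /\
  (forall x : R, s (s x) = x).

Definition is_projection (R : pzRingType) (s : R -> R) (e : R) : Prop :=
  e = s e /\ e = e * e.

(* S is a *-subring of R: contains 0, closed under +, -, * and the involution.
   (A subring need not contain the unity of R.) *)
Definition is_star_subring (R : pzRingType) (s : R -> R) (S : pred R) : Prop :=
  0 \in S /\
  (forall x y, x \in S -> y \in S -> x + y \in S) /\
  (forall x, x \in S -> - x \in S) /\
  (forall x y, x \in S -> y \in S -> x * y \in S) /\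
  (forall x, x \in S -> s x \in S).

Definition has_unity (R : pzRingType) (S : pred R) : Prop :=
  exists2 u, u \in S & forall b, b \in S -> u * b = b /\ b * u = b.

(* The *-ring S (a *-subring of R, with the restricted operations) is a
   generalized Rickart *-ring: for every x in S there are n >= 1 and a
   projection g in S with r_S(x^n) = g S, where
   r_S(a) = {b in S | a b = 0} and g S = {g c | c in S}. *)
Definition gen_rickart_on (R : pzRingType) (s : R -> R) (S : pred R) : Prop :=
  forall x, x \in S ->
    exists n : nat, (0 < n)%N /\
      exists2 g, g \in S &
        is_projection s g /\
        (forall b, (b \in S /\ x ^+ n * b = 0) <-> exists2 c, c \in S & b = g * c).

Definition gen_rickart (R : pzRingType) (s : R -> R) : Prop :=
  gen_rickart_on s predT.

Definition is_GRP (R : pzRingType) (s : R -> R) (x e : R) : Prop :=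
  is_projection s e /\
  exists n : nat, (0 < n)%N /\ x ^+ n * e = x ^+ n /\
    (forall y : R, x ^+ n * y = 0 -> e * y = 0).

(* Main.v *)
Require Import Defs.
From mathcomp Require Import all_boot all_order all_algebra.
Local Open Scope ring_scope.
Import GRing.Theory.

Theorem mainTheorem4 (R : pzRingType) (s : R -> R) (B : pred R) :
  is_involution s ->
  gen_rickart s ->
  is_star_subring s B ->
  has_unity B ->
  (forall x, x \in B -> exists2 e, e \in B & is_GRP s x e) ->
  gen_rickart_on s B.
Proof.
move=> [sD [sM sK]] _ [B0 [BD [BN [BM Bs]]]] [u uB uP] HG x xB.
have [e eB [[es ee] [n [n0 [xe xann]]]]] := HG x xB.
have s0 : s 0 = 0.
  have h := sD 0 0; rewrite addr0 in h.
  by apply: (@addrI _ (s 0)); rewrite addr0 -h.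
have sN : forall y, s (- y) = - s y.
  move=> y; apply/eqP; rewrite -subr_eq0 opprK -sD addNr s0 //.
have su : s u = u.
  have h1 : u * s u = s u by case: (uP _ (Bs _ uB)).
  have := sM u (s u); by rewrite h1 sK h1 => <-.
have xnB : forall m, (0 < m)%N -> x ^+ m \in B.
  elim=> [//|[|m] IH _]; first by rewrite expr1.
  by rewrite exprS BM // IH.
have [ue eu] := uP _ eB.
have [uu _] := uP _ uB.
exists n; split=> //.
apply: (@ex_intro2 _ _ _ (u - e)); first by rewrite BD // BN.
split.
  split; first by rewrite sD sN su -es.
  by rewrite mulrBl !mulrBr uu ue eu -ee subrr subr0.
move=> b; split.
  move=> [bB xb]; exists b => //.
  have [ub _] := uP _ bB.
  by rewrite mulrBl ub xann // subr0.
move=> [c cB ->]; split; first by rewrite BM // BD // BN.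
have [_ xu] := uP _ (xnB _ n0).
by rewrite mulrA mulrBr xu xe subrr mul0r.
Qed.
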